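(* Let $T$ be a tree with at least $3$ vertices. Then for every $v\in V(T)$, $f_{T,v}(v)+1\ge \max_{w\in V(T)} f_{T,w}(w)$.
   Context: For a tree $T$ rooted at $v$, the values $f_{T,v}(w)$, $w\in V(T)$, are defined recursively: if $w$ has no children (no descendants) in the rooted tree, $f_{T,v}(w)=0$; otherwise let $u_0,\dots,u_k$ be the children of $w$, let $T_i$ be the subtree consisting of $u_i$ and all its descendants, rooted at $u_i$, and order them so that $c_i:=f_{T_i,u_i}(u_i)$ satisfy $c_0\ge c_1\ge\cdots\ge c_k$; then $f_{T,v}(w)=\max_{0\le i\le k}(i+c_i)$. *)

(* Defs.v *)
From mathcomp Require Import all_boot.
Set Implicit Arguments. Unset Strict Implicit. Unset Printing Implicit Defensive.

(* A tree: a connected simple graph with no cycle (a cycle = a closed walk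
   with at least 3 pairwise distinct vertices). *)
Definition is_tree (T : finType) (e : rel T) : Prop :=
  [/\ symmetric e, irreflexive e,
      (forall x y : T, connect e x y) &
      (forall c : seq T, ucycle e c -> size c < 3)].

(* fval e n p w : the value f_{T,v}(w) for the tree rooted so that p is the
   parent of w (p = None when w is the root). The children of w are its
   neighbours other than its parent.  n is fuel (structural recursion);
   with n = #|T| it exceeds the depth of every rooted tree on T. *)
Fixpoint fval (T : finType) (e : rel T) (n : nat) (p : option T) (w : T) : nat :=
  match n with
  | 0 => 0
  | n'.+1 =>
    let cs := sort geq [seq fval e n' (Some w) u | u <- enum T & e w u && (Some u != p)] in
    \max_(i < size cs) (i + nth 0 cs i)
  end.

Definition f_root (T : finType) (e : rel T) (v : T) : nat := fval e #|T| None v.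

(* Main.v *)
Require Import Defs.
From mathcomp Require Import all_boot zify.

Definition Fl (cs : seq nat) : nat :=
  let ss := sort geq cs in \max_(i < size ss) (i + nth 0 ss i).

Definition Cnd (t : nat) (cs : seq nat) :=
  forall a, 0 < count (leq a) cs -> count (leq a) cs + a <= t.+1.

Lemma geq_total : total geq. Proof. by move=> x y; rewrite /= leq_total. Qed.
Lemma geq_trans : transitive geq. Proof. by move=> x y z /= H1 H2; apply: leq_trans H2 H1. Qed.
Lemma geq_refl : reflexive geq. Proof. by move=> x /=. Qed.

Lemma FlP t cs : Fl cs <= t <-> Cnd t cs.
Proof.
rewrite /Fl /Cnd.
set ss := sort geq cs.
have Hc : forall P, count P ss = count P cs by move=> P; apply/permP; rewrite perm_sort perm_refl.
have Hsort : sorted geq ss by exact: (sort_sorted geq_total).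
have Hnth : forall i j, i <= j -> j < size ss -> nth 0 ss j <= nth 0 ss i.
  move=> i j Hij Hj.
  by apply: (sorted_leq_nth geq_trans geq_refl 0 Hsort) => //; rewrite inE; lia.
split.
- move=> /bigmax_leqP H a.
  rewrite -!Hc => Ha.
  set K := count (leq a) ss in Ha *.
  have HK : K <= size ss by apply: count_size.
  have Hle : a <= nth 0 ss K.-1.
    rewrite leqNgt; apply/negP => Hlt.
    have : count (leq a) ss <= K.-1.
      rewrite -(cat_take_drop K.-1 ss) count_cat.
      have -> : count (leq a) (drop K.-1 ss) = 0.
        apply/eqP; rewrite -leqn0 leqNgt -has_count -all_predC.
        apply/(all_nthP 0) => j; rewrite size_drop nth_drop => Hj /=.
        rewrite -ltnNge; apply: leq_ltn_trans Hlt; apply: Hnth; lia.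
      rewrite addn0; apply: leq_trans (count_size _ _) _.
      rewrite size_take; case: ifP => //; lia.
    rewrite -/K; lia.
  have := H (Ordinal (n:=size ss) (m:=K.-1) ltac:(lia)) isT.
  rewrite /=; lia.
- move=> H; apply/bigmax_leqP => [[i Hi]] _ /=.
  set a := nth 0 ss i.
  have Hcnt : i.+1 <= count (leq a) ss.
    rewrite -(cat_take_drop i.+1 ss) count_cat.
    have : count (leq a) (take i.+1 ss) = i.+1.
      have Hs : size (take i.+1 ss) = i.+1 by rewrite size_take; case: ifP => //; lia.
      suff: all (leq a) (take i.+1 ss) by rewrite all_count Hs => /eqP.
      apply/(all_nthP 0) => j; rewrite Hs => Hj.
      rewrite nth_take //; apply: Hnth; lia.
    lia.
  have := H a; rewrite -!Hc; lia.
Qed.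

Lemma Fl_self cs : Cnd (Fl cs) cs.
Proof. by apply/FlP. Qed.

Lemma Fl_mono cs ds :
  (forall a, count (leq a) cs <= count (leq a) ds) -> Fl cs <= Fl ds.
Proof.
move=> H; apply/FlP => a Ha.
have := Fl_self ds a; have := H a; lia.
Qed.

Lemma Fl_ge c cs : c \in cs -> c <= Fl cs.
Proof.
move=> Hc; have := Fl_self cs c.
have : 0 < count (leq c) cs by rewrite -has_count; apply/hasP; exists c.
lia.
Qed.

Lemma Fl_cons c cs : Fl (c :: cs) <= maxn c (Fl cs).+1.
Proof.
apply/FlP => a /=; have := Fl_self cs a.
case: (leqP a c) => /= Hac; case: (posnP (count (leq a) cs)) => H0; lia.
Qed.

Set Implicit Arguments. Unset Strict Implicit.
Fixpoint nbp (T : finType) (e : rel T) (x y : T) (s : seq T) : bool :=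
  if s is z :: s' then [&& z != x, e y z & nbp e y z s'] else true.

Lemma nbp_path (T : finType) (e : rel T) s x y : nbp e x y s -> path e y s.
Proof. by elim: s x y => //= z s IH x y /and3P [_ -> /IH]. Qed.

Lemma nb_uniq (T : finType) (e : rel T) : is_tree e ->
  forall s x y, e x y -> nbp e x y s -> uniq (x :: y :: s).
Proof.
case=> Hsym Hirr _ Hcyc.
elim=> [|z s IH] x y Hxy /=.
  by move=> _; rewrite inE andbT; apply/eqP => Exy; subst; rewrite Hirr in Hxy.
move=> /and3P [Hzx Hyz Hnb].
have Hu := IH y z Hyz Hnb.
have Hp2 : path e y (z :: s) by rewrite /= Hyz (nbp_path Hnb).
suff Hnot' : x \notin [:: y, z & s].
  by move: Hu; rewrite /= Hnot' /=.
have Hxy' : x != y by apply/eqP => Exy; subst; rewrite Hirr in Hxy.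
have Hnot : x \notin z :: s.
  apply/negP => Hx.
  move: Hu Hp2 Hx; move Es0 : (z :: s) => s0 Hu Hpath Hx.
  case/splitPr: Hx Es0 Hu Hpath => s1 s2 Es0 Hu Hpath.
  have Hu1 : uniq (x :: y :: s1).
    move: Hu; rewrite /= !mem_cat !inE cat_uniq /= !negb_or.
    case/and4P => /and3P [Hy1 _ _] Hs1 /andP [Hxs1 _] _.
    by rewrite Hxy' Hy1 Hs1 Hxs1.
  have Hcy : ucycle e (x :: y :: s1).
    rewrite /ucycle Hu1 andbT /cycle rcons_path /= Hxy.
    move: Hpath; rewrite cat_path => /andP [-> /=] /andP [H _].
    exact: H.
  have := Hcyc _ Hcy; case: s1 Es0 {Hu Hpath Hu1 Hcy} => //= [[Ez _]] _.
  by rewrite Ez eqxx in Hzx.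
by rewrite inE negb_or Hxy' Hnot.
Qed.

Definition goodw (T : finType) (e : rel T) (p : option T) (w : T) (s : seq T) : bool :=
  if s is u :: s' then [&& e w u, Some u != p & nbp e w u s'] else true.

Lemma fval_S (T : finType) (e : rel T) n p w :
  fval e n.+1 p w = Fl [seq fval e n (Some w) u | u <- enum T & e w u && (Some u != p)].
Proof. by []. Qed.

Lemma sat (T : finType) (e : rel T) n : forall p w m,
  (forall s, goodw e p w s -> size s < n) -> n <= m -> fval e m p w = fval e n p w.
Proof.
elim: n => [|n IH] p w m Hb Hnm.
  by have := Hb [::] isT.
case: m Hnm => // m Hnm.
rewrite !fval_S; congr Fl; apply/eq_in_map => u.
rewrite mem_filter => /andP [/andP [Hwu Hup] _].
apply: IH => // s Hs.
have : goodw e p w (u :: s).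
  rewrite /= Hwu Hup /=.
  case: s Hs => //= z s' /and3P [Huz Hzw Hnb].
  rewrite Huz Hnb !andbT; apply/eqP => Ezw; by rewrite Ezw eqxx in Hzw.
by move/Hb.
Qed.

Lemma goodw_nbp (T : finType) (e : rel T) w u s : goodw e (Some w) u s -> nbp e w u s.
Proof.
case: s => //= z s' /and3P [Huz Hzw Hnb].
rewrite Huz Hnb !andbT; apply/eqP => Ezw; by rewrite Ezw eqxx in Hzw.
Qed.

Lemma uniq_size (T : finType) (s : seq T) : uniq s -> size s <= #|T|.
Proof. by move/card_uniqP <-; apply: max_card. Qed.

Definition G (T : finType) (e : rel T) p w := fval e #|T| p w.

Lemma G_unfold (T : finType) (e : rel T) : is_tree e -> forall p w,
  G e p w = Fl [seq G e (Some w) u | u <- enum T & e w u && (Some u != p)].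
Proof.
move=> Ht p w.
have Hn : #|T| = (#|T|.-1).+1.
  have : 0 < #|T| by apply/card_gt0P; exists w.
  lia.
rewrite /G {1}Hn fval_S; congr Fl; apply/eq_in_map => u.
rewrite mem_filter => /andP [/andP [Hwu Hup] _].
symmetry; apply: sat; last by lia.
move=> s /goodw_nbp Hnb.
have := uniq_size (nb_uniq Ht Hwu Hnb); rewrite /=; lia.
Qed.

Lemma count_L (T : finType) (f : T -> nat) (P : pred T) a :
  count (leq a) [seq f u | u <- enum T & P u] = count (fun u => P u && (a <= f u)) (enum T).
Proof.
rewrite count_map count_filter; apply: eq_count => u /=; by rewrite andbC.
Qed.

Lemma G_R0 (T : finType) (e : rel T) : is_tree e -> forall q w, G e q w <= G e None w.
Proof.
move=> Ht q w; rewrite !(G_unfold Ht); apply: Fl_mono => a; rewrite !count_L.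
by apply: sub_count => u /= /andP [/andP [-> _] ->].
Qed.

Lemma G_E (T : finType) (e : rel T) : is_tree e -> forall p w u,
  e w u -> Some u != p -> G e (Some w) u <= G e p w.
Proof.
move=> Ht p w u Hwu Hup; rewrite [G e p w](G_unfold Ht); apply: Fl_ge.
by apply: map_f; rewrite mem_filter Hwu Hup mem_enum.
Qed.

Lemma G_R (T : finType) (e : rel T) : is_tree e -> forall q w p0,
  e w p0 -> G e q w <= maxn (G e (Some w) p0) (G e (Some p0) w).+1.
Proof.
move=> Ht q w p0 Hwp.
rewrite [G e (Some p0) w](G_unfold Ht) [G e q w](G_unfold Ht).
apply: leq_trans (Fl_cons _ _); apply: Fl_mono => a.
rewrite /= !count_L.
set f := G e (Some w).
case: (leqP a (f p0)) => Ha.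
- rewrite add1n.
  apply: (@leq_trans (count (predU (pred1 p0) (fun u => e w u && (Some u != Some p0) && (a <= f u))) (enum T))).
    apply: sub_count => u /= /andP [/andP [Hwu _] Hau].
    case: (eqVneq u p0) => //= Hu; by rewrite Hwu Hau Hu.
  have := count_predUI (pred1 p0) (fun u => e w u && (Some u != Some p0) && (a <= f u)) (enum T).
  rewrite count_uniq_mem ?enum_uniq // mem_enum (_ : p0 \in T = true) // /=; lia.
- rewrite add0n; apply: sub_count => u /= /andP [/andP [Hwu _] Hau].
  rewrite Hwu Hau andbT /=; apply/eqP => [[Eu]]; subst u; lia.
Qed.

Lemma chain (T : finType) (e : rel T) t : is_tree e -> forall s x y,
  path e y s -> uniq (x :: y :: s) -> e x y ->
  G e (Some x) y <= t -> G e (Some y) x <= t.+1 -> G e None (last y s) <= t.+1.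
Proof.
move=> Ht; have [Hsym _ _ _] := Ht.
elim=> [|z s IH] x y /= Hp Hu Hxy H1 H2.
  apply: leq_trans (G_R Ht None (_ : e y x)) _; first by rewrite Hsym.
  rewrite geq_max H2 /=; lia.
case/andP: Hp => Hyz Hp.
have Hzx : Some z != Some x.
  apply/eqP => [[Ezx]]; subst z; move: Hu; by rewrite /= !inE eqxx /= orbT.
apply: (IH y z Hp _ Hyz).
- by case/andP: Hu.
- by apply: leq_trans (G_E Ht Hyz Hzx) H1.
- apply: leq_trans (G_R Ht (Some z) (_ : e y x)) _; first by rewrite Hsym.
  rewrite geq_max H2 /=; lia.
Qed.

Unset Implicit Arguments.
Theorem proposition4p3 (T : finType) (e : rel T) :
  is_tree e -> 3 <= #|T| ->
  forall v : T, (\max_(w : T) f_root e w) <= f_root e v + 1.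
Proof.
move=> Ht _ v; have [_ _ Hc _] := Ht.
rewrite addn1; apply/bigmax_leqP => w _.
rewrite /f_root -/(G e None w) -/(G e None v).
case: (eqVneq w v) => [->|Hwv]; first by apply: leqnSn.
have /connectP [p Hp Hl] := Hc v w.
case: (shortenP Hp) Hl => p' Hp' Hu _ Hl.
case: p' Hp' Hu Hl => [|y s] /= Hp' Hu Hl.
  by rewrite Hl eqxx in Hwv.
case/andP: Hp' => Hvy Hps.
rewrite Hl; apply: (chain Ht Hps Hu Hvy).
- exact: (G_E Ht Hvy (isT : Some y != None)).
- apply: leq_trans (G_R0 Ht _ _) _; exact: leqnSn.
Qed.
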